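(* For every $n\ge 2$ and every pure state $|\psi\rangle$ on a set $V$ of $n$ qubits, the entanglement width satisfies $ew(|\psi\rangle)\le\lceil n/3\rceil$.
   Context: For a pure state $|\psi\rangle$ on a set $V$ of qubits and a bipartition $V=A\sqcup B$, with Schmidt decomposition $|\psi\rangle=\sum_i\alpha_i|\psi_i\rangle_A|\phi_i\rangle_B$ ($\alpha_i>0$), the bipartite entanglement entropy is $E_{A,B}(|\psi\rangle)=-\sum_i\alpha_i^2\log_2(\alpha_i^2)$. A subcubic tree is a tree with all vertex degrees at most 3. A branch decomposition of $V$ is a pair $(T,\mathcal{L})$ where $T$ is a subcubic tree and $\mathcal{L}$ a bijection from the leaves of $T$ to $V$; removing an edge $e$ of $T$ splits the leaves into two sets, hence via $\mathcal{L}$ induces a bipartition $A^e\sqcup B^e$ of $V$. The width of $(T,\mathcal{L})$ is $\max_{e\in E(T)}E_{A^e,B^e}(|\psi\rangle)$, and the entanglement width $ew(|\psi\rangle)$ is the minimum width over all branch decompositions of $V$. *)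

(* Defs.v *)
From HB Require Import structures.
From mathcomp Require Import all_boot all_order all_algebra.
From mathcomp Require Import all_classical all_reals.
From mathcomp Require Import exp.
From mathcomp Require Import complex.

Set Implicit Arguments.
Unset Strict Implicit.
Unset Printing Implicit Defensive.

Import Order.TTheory GRing.Theory Num.Theory.
Local Open Scope ring_scope.

Section Defs.
Variable R : realType.
Local Notation C := R[i].

Definition log2 (x : R) : R := ln x / ln 2.

Variable V : finType.

(* classical configurations (computational basis labels) of the qubits in V *)
Definition config := {ffun V -> bool}.

Definition pure_state (psi : {ffun config -> C}) : Prop :=
  \sum_(x : config) psi x * (psi x)^* = 1.

Definition qubits (S : {set V}) := {v : V | v \in S}.
Definition configS (S : {set V}) := {ffun qubits S -> bool}.

Definition restr (S : {set V}) (x : config) : configS S :=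
  [ffun q : qubits S => x (val q)].

Definition orthonormal (S : {set V}) (k : nat) (u : 'I_k -> {ffun configS S -> C}) :=
  forall i j : 'I_k, \sum_(a : configS S) (u i a)^* * u j a = (i == j)%:R.

Definition schmidt_decomp (psi : {ffun config -> C}) (A : {set V})
  (k : nat) (alpha : 'I_k -> R) (u : 'I_k -> {ffun configS A -> C})
  (w : 'I_k -> {ffun configS (~: A) -> C}) : Prop :=
  [/\ forall i, 0 < alpha i,
      orthonormal u, orthonormal w &
      forall x : config,
        psi x = \sum_(i < k) (alpha i)%:C%C * u i (restr A x) * w i (restr (~: A) x)].

Definition schmidt_entropy (k : nat) (alpha : 'I_k -> R) : R :=
  - \sum_(i < k) (alpha i ^+ 2) * log2 (alpha i ^+ 2).

(* the set of values -\sum alpha_i^2 log2 alpha_i^2 over all Schmidt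
   decompositions (this value does not depend on the decomposition) *)
Definition schmidt_entropies (psi : {ffun config -> C}) (A : {set V}) : set R :=
  [set h | exists k alpha u w,
     @schmidt_decomp psi A k alpha u w /\ h = schmidt_entropy alpha].

Definition ent_entropy (psi : {ffun config -> C}) (A : {set V}) : R :=
  xget 0 (schmidt_entropies psi A).

Definition simple_graph (m : nat) (adj : rel 'I_m) :=
  irreflexive adj /\ symmetric adj.

Definition degree (m : nat) (adj : rel 'I_m) (x : 'I_m) : nat :=
  #|[set y | adj x y]|.

Definition is_tree (m : nat) (adj : rel 'I_m) : Prop :=
  [/\ simple_graph adj, (0 < m)%N,
      (forall x y, connect adj x y) &
      forall c : seq 'I_m, uniq c -> (2 < size c)%N -> ~~ cycle adj c].

Definition subcubic_tree (m : nat) (adj : rel 'I_m) : Prop :=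
  is_tree adj /\ forall x, (degree adj x <= 3)%N.

Definition is_leaf (m : nat) (adj : rel 'I_m) (x : 'I_m) : bool :=
  (degree adj x == 1)%N.

(* a branch decomposition (T, L) of V: T subcubic tree on 'I_m, and the
   bijection L from the leaves of T to V is given through its inverse
   lab : V -> 'I_m, an injection whose image is exactly the set of leaves *)
Definition branch_decomp (m : nat) (adj : rel 'I_m) (lab : V -> 'I_m) : Prop :=
  [/\ subcubic_tree adj, injective lab,
      (forall v, is_leaf adj (lab v)) &
      (forall x, is_leaf adj x -> exists v, lab v = x)].

Definition remove_edge (m : nat) (adj : rel 'I_m) (u v : 'I_m) : rel 'I_m :=
  fun x y => adj x y && ~~ (((x == u) && (y == v)) || ((x == v) && (y == u))).

(* A^e for the edge e = {u, v}: the elements of V labelling the leaves on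
   u's side after removing e (B^e is its complement) *)
Definition edge_side (m : nat) (adj : rel 'I_m) (lab : V -> 'I_m) (u v : 'I_m)
  : {set V} := [set x | connect (remove_edge adj u v) u (lab x)].

Definition bd_width (psi : {ffun config -> C}) (m : nat) (adj : rel 'I_m)
  (lab : V -> 'I_m) : R :=
  \big[Num.max/0]_(p : 'I_m * 'I_m | adj p.1 p.2)
     ent_entropy psi (edge_side adj lab p.1 p.2).

(* entanglement width: minimum (infimum, which is attained) of the widths *)
Definition ent_width (psi : {ffun config -> C}) : R :=
  inf [set w | exists (m : nat) (adj : rel 'I_m) (lab : V -> 'I_m),
          branch_decomp adj lab /\ w = bd_width psi adj lab].

End Defs.

(* Main.v *)
Require Import Defs.
From HB Require Import structures.
From mathcomp Require Import all_boot all_order all_algebra.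
From mathcomp Require Import all_classical all_reals.
From mathcomp Require Import exp.
From mathcomp Require Import complex.
From mathcomp Require Import zify ring lra.

Import Order.TTheory GRing.Theory Num.Theory.
Set Implicit Arguments.
Unset Strict Implicit.

Section Gen.
Variable m : nat.
Variable par : nat -> nat.
Hypothesis par_lt : forall x, (0 < x)%N -> (par x < x)%N.
Hypothesis par0 : par 0 = 0.

Definition padj : rel 'I_m := fun x y =>
  (nat_of_ord x != nat_of_ord y) && ((par x == y) || (par y == x)).

Lemma par_le x : (par x <= x)%N.
Proof. by case: x => [|x]; [rewrite par0|exact/ltnW/par_lt]. Qed.

Lemma padj_sym : symmetric padj.
Proof. by move=> x y; rewrite /padj eq_sym orbC. Qed.

Lemma padj_irr : irreflexive padj.
Proof. by move=> x; rewrite /padj eqxx. Qed.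

Lemma padjE x y : padj x y -> (par x = y /\ (y < x)%N) \/ (par y = x /\ (x < y)%N).
Proof.
case/andP=> ne /orP[] /eqP e.
  left; split => //.
  have x0 : (0 < x)%N by rewrite lt0n; apply/eqP => x0; move: ne; rewrite -e x0 par0 eqxx.
  by move: (par_lt x0); rewrite e.
right; split => //.
have y0 : (0 < y)%N by rewrite lt0n; apply/eqP => y0; move: ne; rewrite -e y0 par0 eqxx.
by move: (par_lt y0); rewrite e.
Qed.

Lemma seq_max (T : eqType) (f : T -> nat) (s : seq T) x0 : x0 \in s ->
  exists2 M, M \in s & forall y, y \in s -> (f y <= f M)%N.
Proof.
elim: s x0 => // a s IH x0 _.
case: s IH => [|b s] IH.
  by exists a; rewrite ?mem_head // => y; rewrite inE => /eqP ->.
have [M MS Mmax] := IH b (mem_head _ _).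
case: (leqP (f a) (f M)) => h.
  exists M; first by rewrite inE MS orbT.
  by move=> y; rewrite inE => /orP[/eqP ->|]; [|exact: Mmax].
exists a; first exact: mem_head.
move=> y; rewrite inE => /orP[/eqP ->//|/Mmax]; move=> h2; apply: leq_trans h2 (ltnW h).
Qed.

Lemma padj_acyclic (c : seq 'I_m) : uniq c -> (2 < size c)%N -> ~~ cycle padj c.
Proof.
move=> uc sc; apply/negP => cc.
have x0 : 'I_m by case: c sc {uc cc} => // x.
case: c uc sc cc => [//|a c0] uc sc cc.
have [M MC Mmax] := seq_max val (mem_head a c0).
set c := a :: c0 in uc sc cc MC Mmax.
have := rot_index MC; set i := index M c => er.
have ur : uniq (rot i c) by rewrite rot_uniq.
have sr : (2 < size (rot i c))%N by rewrite size_rot.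
have cr : cycle padj (rot i c) by rewrite rot_cycle.
have memr y : y \in rot i c -> (val y <= val M)%N by rewrite mem_rot; exact: Mmax.
move: ur sr cr memr; rewrite er; set s := (drop _ _ ++ _).
case: s => [//|y s]; case/lastP: s => [//|s z] ur _ cr memr.
move: cr; rewrite /cycle rcons_path last_cons last_rcons -cat1s cat_path => /andP[/andP[/andP[aMy _] _] azM].
have hy : (val y <= val M)%N by apply: memr; rewrite !inE eqxx orbT.
have hz : (val z <= val M)%N by apply: memr; rewrite !inE mem_rcons mem_head !orbT.
have py : par M = y.
  case: (padjE aMy) => [[]//|[_ h]]; by move: (leq_ltn_trans hy h); rewrite ltnn.
have pz : par M = z.
  case: (padjE azM) => [[_ h]|[]//]; by move: (leq_ltn_trans hz h); rewrite ltnn.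
move: ur; rewrite /= => /andP[_ /andP[]]; rewrite mem_rcons inE.
have -> : y = z by apply/val_inj; rewrite /= -py -pz.
by rewrite eqxx.
Qed.

Lemma closed_connect (e : rel 'I_m) (P : 'I_m -> bool) :
  (forall x y, e x y -> P x = P y) -> forall x y, connect e x y -> P x = P y.
Proof.
move=> H x y /connectP[p pp ->]; elim: p x pp => //= z p IH x /andP[exz pz].
by rewrite (H _ _ exz); exact: IH.
Qed.

Definition pv (x : 'I_m) : 'I_m := Ordinal (leq_ltn_trans (par_le x) (ltn_ord x)).

Lemma padj_pv (x : 'I_m) : (0 < x)%N -> padj x (pv x).
Proof.
move=> x0; rewrite /padj /= eqxx orTb andbT.
by rewrite neq_ltn (par_lt x0) orbT.
Qed.

Lemma conn_root (o : 'I_m) (ho : nat_of_ord o = 0) x : connect padj x o.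
Proof.
suff H : forall k (x : 'I_m), (x <= k)%N -> connect padj x o by exact: H (leqnn _).
elim => [|k IH] y hy.
  have -> : y = o by apply/val_inj => /=; rewrite ho; move: hy; rewrite leqn0 => /eqP.
  exact: connect0.
case: (posnP y) => y0.
  have -> : y = o by apply/val_inj => /=; rewrite ho.
  exact: connect0.
apply: connect_trans (connect1 (padj_pv y0)) (IH _ _) => /=.
by rewrite -ltnS; apply: leq_trans (par_lt y0) hy.
Qed.

Lemma rem_closed (c : 'I_m) (c0 : (0 < c)%N) (D : pred nat)
  (HD : forall y : 'I_m, (0 < y)%N -> nat_of_ord y != nat_of_ord c -> D y = D (par y)) :
  forall x y, remove_edge padj c (pv c) x y -> D x = D y.
Proof.
move=> x y /andP[a nr]; case: (padjE a) => [[e lt]|[e lt]].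
  case: (eqVneq (nat_of_ord x) (nat_of_ord c)) => xc.
    have xc' : x = c by apply/val_inj.
    have yc : y = pv c by apply/val_inj; rewrite /= -xc' e.
    by move: nr; rewrite xc' yc !eqxx.
  by rewrite HD ?e // (leq_ltn_trans _ lt).
case: (eqVneq (nat_of_ord y) (nat_of_ord c)) => yc.
  have yc' : y = c by apply/val_inj.
  have xc : x = pv c by apply/val_inj; rewrite /= -yc' e.
  by move: nr; rewrite yc' xc !eqxx orbT.
by rewrite [D y]HD ?e // (leq_ltn_trans _ lt).
Qed.

Lemma conn_out (c : 'I_m) (c0 : (0 < c)%N) (D : pred nat)
  (HD : forall y : 'I_m, (0 < y)%N -> nat_of_ord y != nat_of_ord c -> D y = D (par y))
  (Dc : D c) (o : 'I_m) (ho : nat_of_ord o = 0) (Do : ~~ D 0) :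
  forall x : 'I_m, ~~ D x -> connect (remove_edge padj c (pv c)) x o.
Proof.
suff H : forall k (x : 'I_m), (x <= k)%N -> ~~ D x -> connect (remove_edge padj c (pv c)) x o.
  by move=> x; exact: H (leqnn _).
elim => [|k IH] y hy Dy.
  have -> : y = o by apply/val_inj => /=; rewrite ho; move: hy; rewrite leqn0 => /eqP.
  exact: connect0.
case: (posnP y) => y0.
  have -> : y = o by apply/val_inj => /=; rewrite ho.
  exact: connect0.
have yc : nat_of_ord y != nat_of_ord c by apply/eqP => e; move: Dy; rewrite e Dc.
have e1 : remove_edge padj c (pv c) y (pv y).
  rewrite /remove_edge padj_pv //=.
  have -> : (y == c) = false by apply/negbTE; move: yc; apply: contra => /eqP ->.
  rewrite /=; apply/negP => /andP[/eqP yp /eqP pc].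
  have h1 : par y = c by rewrite -pc.
  have h2 : nat_of_ord y = par c by rewrite yp.
  have := par_lt c0; have := par_lt y0; lia.
apply: connect_trans (connect1 e1) (IH _ _ _) => /=.
  by rewrite -ltnS; apply: leq_trans (par_lt y0) hy.
by rewrite -HD.
Qed.

End Gen.

Definition par6 (x : nat) : nat :=
  if x == 0 then 0 else if x %% 2 == 1 then (if x < 7 then 0 else x - 6) else x - 1.
Lemma par6_lt x : (0 < x)%N -> (par6 x < x)%N.
Proof. rewrite /par6; repeat case: ifP; lia. Qed.
Lemma par60 : par6 0 = 0. Proof. by []. Qed.
Lemma par6_spec x : (x = 0 /\ par6 x = 0) \/ (0 < x < 7 /\ x %% 2 = 1 /\ par6 x = 0)%N
  \/ (7 <= x /\ x %% 2 = 1 /\ par6 x = x - 6)%N \/ (0 < x /\ x %% 2 = 0 /\ par6 x = x - 1)%N.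
Proof. rewrite /par6; repeat case: ifP; lia. Qed.
Definition key (y : nat) := if y %% 2 == 1 then y else y - 1.
Definition Dset (c y : nat) : bool :=
  if c %% 2 == 1 then (0 < y)%N && (c <= key y)%N && (key y %% 6 == c %% 6) else (y == c).
Lemma HD c y : (0 < c)%N -> (0 < y)%N -> y != c -> Dset c y = Dset c (par6 y).
Proof. rewrite /Dset /par6 /key; repeat case: ifP; lia. Qed.
Lemma Dc c : (0 < c)%N -> Dset c c.
Proof. rewrite /Dset /key; repeat case: ifP; lia. Qed.
Lemma Dpc c : (0 < c)%N -> ~~ Dset c (par6 c).
Proof. rewrite /Dset /par6 /key; repeat case: ifP; lia. Qed.
Lemma D0 c : (0 < c)%N -> ~~ Dset c 0.
Proof. rewrite /Dset /key; repeat case: ifP; lia. Qed.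

Lemma card_le_seq m (A : {set 'I_m}) (s : seq nat) :
  (forall y, y \in A -> nat_of_ord y \in s) -> (#|A| <= size s)%N.
Proof.
move=> H; rewrite cardE -(size_map (@nat_of_ord m)); apply: uniq_leq_size.
  by rewrite map_inj_uniq ?enum_uniq //; exact: val_inj.
by move=> z /mapP[y]; rewrite mem_enum => /H yin ->.
Qed.

Section Spec.
Variable n : nat.
Hypothesis hn : (2 <= n)%N.
Let m := (2 * n).+1.
Let adj := @padj m par6.

Definition nbl (x : nat) := if x == 0 then [:: 1; 3; 5] else [:: par6 x; x + 1; x + 6].
Lemma nbr_sub (x y : 'I_m) : adj x y -> nat_of_ord y \in nbl x.
Proof.
rewrite /nbl; case/(padjE par6_lt par60) => [[e lt]|[e lt]]; case: ifP => x0; rewrite !inE.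
- by move: lt; rewrite (eqP x0).
- by rewrite e eqxx.
- by move: e x0 lt; rewrite /par6; repeat case: ifP; lia.
- by move: e x0 lt; rewrite /par6; repeat case: ifP; lia.
Qed.

Lemma nbr_sub_even (x y : 'I_m) : (0 < x)%N -> x %% 2 = 0 -> adj x y -> nat_of_ord y \in [:: par6 x].
Proof.
move=> x0 ev; case/(padjE par6_lt par60) => [[e _]|[e _]]; rewrite !inE.
  by rewrite e eqxx.
by move: e ev x0; rewrite /par6; repeat case: ifP; lia.
Qed.

Lemma deg_le3 x : (degree adj x <= 3)%N.
Proof.
have -> : 3 = size (nbl x) by rewrite /nbl; case: ifP.
by apply: card_le_seq => y; rewrite inE; exact: nbr_sub.
Qed.

Lemma ordE (k : nat) (h : (k < m)%N) : nat_of_ord (Ordinal h) = k. Proof. by []. Qed.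

Lemma deg_ge2 (x : 'I_m) : (x == 0 :> nat) || (x %% 2 == 1) -> (1 < degree adj x)%N.
Proof.
move=> hx; apply/card_gt1P.
case/orP: hx => hx.
  have h1 : (1 < m)%N by rewrite /m; lia.
  have h3 : (3 < m)%N by rewrite /m; lia.
  exists (Ordinal h1), (Ordinal h3); rewrite !inE /adj /padj !ordE; split => //.
    by move: hx; have := par6_spec x; have := par6_spec 1; lia.
  by move: hx; have := par6_spec x; have := par6_spec 3; lia.
have h1 : (x + 1 < m)%N by move: (ltn_ord x) hx; rewrite /m; lia.
have h2 : (par6 x < m)%N by apply: leq_ltn_trans (par_le par6_lt par60 _) (ltn_ord x).
exists (Ordinal h1), (Ordinal h2); rewrite !inE /adj /padj !ordE; split.
- by move: hx; have := par6_spec x; have := par6_spec (x + 1); lia.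
- by move: hx; have := par6_spec x; have := par6_spec (par6 x); lia.
- apply/negP => /eqP/(congr1 (@nat_of_ord m)); rewrite !ordE.
  by move: hx; have := par6_spec x; lia.
Qed.

Lemma deg_even (x : 'I_m) : (0 < x)%N -> x %% 2 = 0 -> degree adj x = 1%N.
Proof.
move=> x0 ev; apply/eqP; rewrite eqn_leq; apply/andP; split.
  by apply: (@card_le_seq _ _ [:: par6 x]) => y; rewrite inE; exact: nbr_sub_even x0 ev.
have h2 : (par6 x < m)%N by apply: leq_ltn_trans (par_le par6_lt par60 _) (ltn_ord x).
apply/card_gt0P; exists (Ordinal h2); rewrite !inE /adj /padj !ordE.
by move: ev x0; have := par6_spec x; have := par6_spec (par6 x); lia.
Qed.

End Spec.

Local Open Scope ring_scope.

Lemma ln_le_sub1 (R : realType) (x : R) : 0 < x -> ln x <= x - 1.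
Proof.
move=> x0.
have h := expR_ge1Dx (x - 1).
rewrite addrC subrK in h.
by rewrite -(expRK (x - 1)) ler_ln ?posrE ?expR_gt0.
Qed.

Lemma gibbs (R : realType) k (p : 'I_k -> R) : (forall i, 0 < p i) ->
  \sum_i p i = 1 -> - \sum_i p i * ln (p i) <= ln k%:R.
Proof.
move=> p0 s1.
have k0 : (0 < k)%N.
  case: k p p0 s1 => // p p0; rewrite big_ord0 => /eqP; rewrite eq_sym oner_eq0 //.
have kR : 0 < (k%:R : R) by rewrite ltr0n.
have h i : - (p i * ln (p i)) - p i * ln k%:R <= k%:R^-1 - p i.
  have kV : 0 < (k%:R : R)^-1 by rewrite invr_gt0.
  have pV : 0 < (p i)^-1 by rewrite invr_gt0.
  have := @ln_le_sub1 R _ (mulr_gt0 kV pV).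
  rewrite lnM ?posrE ?invr_gt0 // !lnV ?posrE //.
  move/(ler_wpM2l (ltW (p0 i))).
  have -> : p i * (k%:R^-1 / p i - 1) = k%:R^-1 - p i.
    by rewrite mulrBr mulr1 mulrCA mulfV ?gt_eqF // mulr1.
  rewrite mulrBr mulrN => H; apply: le_trans H; lra.
have H : \sum_i (- (p i * ln (p i)) - p i * ln k%:R) <= \sum_i (k%:R^-1 - p i).
  by apply: ler_sum => i _; exact: h.
move: H; rewrite !big_split /= sumr_const card_ord !sumrN.
rewrite -(mulr_suml _ _ (fun i => p i)) s1 mul1r.
rewrite -[k%:R^-1 *+ k]mulr_natr mulVf ?gt_eqF // subrr; lra.
Qed.

Lemma ortho_card (F : fieldType) (T : finType) k (u : 'I_k -> T -> F) (c : F -> F) :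
  (forall i j, \sum_a c (u i a) * u j a = (i == j)%:R) -> (k <= #|T|)%N.
Proof.
move=> H.
pose M1 : 'M[F]_(k, #|T|) := \matrix_(i, j) c (u i (enum_val j)).
pose M2 : 'M[F]_(#|T|, k) := \matrix_(j, i) u i (enum_val j).
have E : M1 *m M2 = 1%:M.
  apply/matrixP => i j; rewrite !mxE -H.
  rewrite (big_enum_val (A := T) (fun a => c (u i a) * u j a)) /=.
  by apply: eq_bigr => l _; rewrite !mxE.
have := mxrankM_maxl M1 M2; rewrite E mxrank1 => h.
exact: leq_trans h (rank_leq_col M1).
Qed.

Section Split.
Variable V : finType.
Variable A : {set V}.

Definition glue (p : configS A * configS (~: A)) : config V :=
  [ffun v => if insub v : option (qubits A) is Some q then p.1 q
             else if insub v : option (qubits (~: A)) is Some q then p.2 q else false].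

Definition splitc (x : config V) := (restr A x, restr (~: A) x).

Lemma splitcK : cancel splitc glue.
Proof.
move=> x; apply/ffunP => v; rewrite ffunE /=.
case: (boolP (v \in A)) => h.
  by rewrite (insubT (fun v => v \in A) h) /= ffunE.
rewrite insubF; last by apply/negbTE.
have h' : v \in ~: A by rewrite inE.
by rewrite (insubT (fun v => v \in ~: A) h') /= ffunE.
Qed.

Lemma glueK : cancel glue splitc.
Proof.
case=> a b; rewrite /splitc; congr pair; apply/ffunP => q; rewrite ffunE /glue ffunE.
  by rewrite valK.
have hq : val q \notin A by have := valP q; rewrite inE.
by rewrite insubF ?(negbTE hq) // valK.
Qed.

Lemma sum_split (R : nmodType) (G : configS A -> configS (~: A) -> R) :
  \sum_(x : config V) G (restr A x) (restr (~: A) x) = \sum_a \sum_b G a b.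
Proof.
rewrite pair_bigA /= (reindex glue) /=; last by exists splitc => p _; [exact: glueK|exact: splitcK].
apply: eq_bigr => -[a b] _; have := glueK (a, b); rewrite /splitc => -[-> ->] //.
Qed.
End Split.

Lemma sum4 (R : nmodType) (I J K L : finType) (F : I -> J -> K -> L -> R) :
  \sum_a \sum_b \sum_i \sum_j F i j a b = \sum_i \sum_j \sum_a \sum_b F i j a b.
Proof.
under eq_bigr => a _ do rewrite exchange_big.
rewrite exchange_big; apply: eq_bigr => i _.
under eq_bigr => a _ do rewrite exchange_big.
by rewrite exchange_big.
Qed.

Lemma conjC_rc (R : realType) (a : R) : ((a%:C)%C : R[i])^* = (a%:C)%C.
Proof. exact: conjc_real. Qed.
Lemma rcM (R : realType) (a b : R) : (((a * b)%:C)%C : R[i]) = (a%:C)%C * (b%:C)%C.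
Proof. by rewrite rmorphM. Qed.

Lemma schmidt_norm (R : realType) (V : finType) (psi : {ffun config V -> R[i]})
  (A : {set V}) k (alpha : 'I_k -> R) u w :
  pure_state psi -> @schmidt_decomp R V psi A k alpha u w -> \sum_i alpha i ^+ 2 = 1.
Proof.
move=> hpsi [a0 ou ow hdec].
pose X i a b := ((alpha i)%:C)%C * u i a * w i b.
have E1 : \sum_(x : config V) psi x * (psi x)^* =
   \sum_a \sum_b (\sum_i X i a b) * (\sum_i X i a b)^*.
  rewrite -(sum_split (fun a b => (\sum_i X i a b) * (\sum_i X i a b)^*)).
  by apply: eq_bigr => x _; rewrite hdec.
have E2 : forall a b, (\sum_i X i a b) * (\sum_i X i a b)^* =
   \sum_i \sum_j ((alpha i * alpha j)%:C)%C * ((u i a * (u j a)^*) * (w i b * (w j b)^*)).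
  move=> a b; rewrite rmorph_sum mulr_suml; apply: eq_bigr => i _.
  rewrite mulr_sumr; apply: eq_bigr => j _.
  rewrite /X !rmorphM /= conjC_rc.
  by ring.
move: hpsi; rewrite /pure_state E1.
under eq_bigr => a _ do under eq_bigr => b _ do rewrite E2.
rewrite sum4.
have E3 : forall i j, \sum_a \sum_b ((alpha i * alpha j)%:C)%C *
     ((u i a * (u j a)^*) * (w i b * (w j b)^*)) =
     ((alpha i * alpha j)%:C)%C * ((j == i)%:R * (j == i)%:R).
  move=> i j; rewrite -{1}(ou j i) -(ow j i) mulr_suml mulr_sumr; apply: eq_bigr => a _.
  rewrite mulr_sumr mulr_sumr; apply: eq_bigr => b _.
  by ring.
under eq_bigr => i _ do under eq_bigr => j _ do rewrite E3.
have E4 : forall i, \sum_j ((alpha i * alpha j)%:C)%C * ((j == i)%:R * (j == i)%:R : R[i])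
   = ((alpha i ^+ 2)%:C)%C.
  move=> i; rewrite (bigD1 i) //= eqxx mulr1 mulr1 expr2 big1 ?addr0 // => j /negbTE ->.
  by rewrite mulr0 mulr0.
under eq_bigr => i _ do rewrite E4.
rewrite -rmorph_sum -(rmorph1 (real_complex R)).
by move/complexI.
Qed.

Lemma ent_le (R : realType) k (alpha : 'I_k -> R) s : (forall i, 0 < alpha i) ->
  \sum_i alpha i ^+ 2 = 1 -> (k <= 2 ^ s)%N -> schmidt_entropy alpha <= s%:R.
Proof.
move=> a0 s1 ks.
have p0 i : 0 < alpha i ^+ 2 by rewrite exprn_gt0.
have g := gibbs p0 s1.
have ln2 : 0 < ln (2 : R) by rewrite ln_gt0 // ltr1n.
have k0 : (0 < k)%N.
  case: k alpha a0 s1 {p0 g ks} => // al _; rewrite big_ord0 => /eqP; rewrite eq_sym oner_eq0 //.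
have hk : ln (k%:R : R) <= s%:R * ln 2.
  rewrite mulr_natl -lnXn // -natrX ler_ln ?posrE ?ltr0n ?expn_gt0 // ler_nat; exact: ks.
rewrite /schmidt_entropy /log2.
under eq_bigr => i _ do rewrite mulrA.
rewrite -mulr_suml -mulNr ler_pdivrMr //.
exact: le_trans g hk.
Qed.

Lemma card_configS (V : finType) (S : {set V}) : #|{: configS S}| = (2 ^ #|S|)%N.
Proof.
rewrite card_ffun card_bool card_sig; congr (_ ^ _)%N; apply: eq_card => x //.
Qed.

Lemma entropy_bound (R : realType) (V : finType) (psi : {ffun config V -> R[i]})
  (A : {set V}) k (alpha : 'I_k -> R) u w :
  pure_state psi -> @schmidt_decomp R V psi A k alpha u w ->
  schmidt_entropy alpha <= #|A|%:R /\ schmidt_entropy alpha <= #|~: A|%:R.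
Proof.
move=> hp hd; have s1 := schmidt_norm hp hd.
case: hd => a0 ou ow _; split; apply: ent_le => //; rewrite -card_configS.
  exact: (@ortho_card _ _ k (fun i a => u i a) Num.conj).
exact: (@ortho_card _ _ k (fun i a => w i a) Num.conj).
Qed.

Lemma ent_entropy_bound (R : realType) (V : finType) (psi : {ffun config V -> R[i]})
  (A : {set V}) : pure_state psi ->
  ent_entropy psi A <= #|A|%:R /\ ent_entropy psi A <= #|~: A|%:R.
Proof.
move=> hp; rewrite /ent_entropy.
case: (pselect (exists h, schmidt_entropies psi A h)) => [ex|nex].
  have := xgetPex 0 ex; move=> [k [al [u [w [hd ->]]]]].
  exact: entropy_bound hp hd.
rewrite xgetPN; first by rewrite !ler0n.
by move=> x hx; apply: nex; exists x.
Qed.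

Lemma bd_width_ge0 (R : realType) (V : finType) (psi : {ffun config V -> R[i]}) m
  (adj : rel 'I_m) (lab : V -> 'I_m) : 0 <= bd_width psi adj lab.
Proof.
rewrite /bd_width; elim/big_rec: _ => // i x _ hx.
by rewrite le_max hx orbT.
Qed.

Lemma nat_le_ceil (R : realType) n : (((n + 2) %/ 3)%:R : R) <= (Num.ceil (n%:R / 3 : R))%:~R.
Proof.
set c := Num.ceil _.
have h1 : (n%:R / 3 : R) <= c%:~R by exact: Num.Theory.ceil_ge.
have h2 : ((n%:Z)%:~R : R) <= (3 * c)%:~R.
  rewrite intrM; move: h1; rewrite ler_pdivrMr ?ltr0n // => h.
  by rewrite [_ * c%:~R]mulrC -[(n%:Z)%:~R]/(n%:R); rewrite -[3%:~R]/(3%:R).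
rewrite ler_int in h2.
rewrite -[((n + 2) %/ 3)%:R]/(((n + 2) %/ 3)%:Z%:~R) ler_int.
lia.
Qed.

Section Tree.
Variable V : finType.
Hypothesis hn : (2 <= #|V|)%N.
Local Notation m := (2 * #|V|).+1.
Local Notation adj := (@padj m par6).
Local Notation pv6 := (@pv m par6 par6_lt par60).

Lemma rank_lt (v : V) : (enum_rank v < #|V|)%N. Proof. exact: ltn_ord. Qed.

Lemma lab_lt (v : V) : (2 + 2 * enum_rank v < m)%N.
Proof. by move: (rank_lt v); lia. Qed.
Definition lab6 (v : V) : 'I_m := Ordinal (lab_lt v).

Lemma m_gt0 : (0 < m)%N. Proof. by []. Qed.
Definition o6 : 'I_m := Ordinal m_gt0.

Lemma tree_bd : branch_decomp adj lab6.
Proof.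
split.
- split; last by move=> x; exact: deg_le3.
  split.
  + split; [exact: padj_irr | exact: padj_sym].
  + by [].
  + move=> x y; apply: connect_trans (conn_root par6_lt par60 (o:=o6) erefl x) _.
    by rewrite (sym_connect_sym (padj_sym par6)); exact: (conn_root par6_lt par60 (o:=o6) erefl y).
  + by move=> c; exact: (padj_acyclic par6_lt par60).
- move=> u v /(congr1 (@nat_of_ord _)) /= h; apply: enum_rank_inj; apply/val_inj => /=; lia.
- by move=> v; rewrite /is_leaf deg_even //=; lia.
- move=> x; rewrite /is_leaf => /eqP h1.
  have hx : ~~ ((nat_of_ord x == 0)%N || (nat_of_ord x %% 2 == 1)%N).
    by apply/negP => /(deg_ge2 hn); rewrite h1.
  have hr : ((nat_of_ord x - 2) %/ 2 < #|V|)%N by move: hx (ltn_ord x); lia.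
  exists (enum_val (Ordinal hr)); apply/val_inj; rewrite /= enum_valK /=.
  have ex : forall k : nat, ~~ ((k == 0)%N || (k %% 2 == 1)%N) -> (2 + 2 * ((k - 2) %/ 2))%N = k.
    by move=> k; lia.
  exact: ex.
Qed.

Lemma Sc_card (c : 'I_m) : (0 < c)%N ->
  (#|[set v | Dset c (lab6 v)]| <= (#|V| + 2) %/ 3)%N.
Proof.
move=> c0.
have fl (v : V) : (enum_rank v %/ 3 < (#|V| + 2) %/ 3)%N by move: (rank_lt v); lia.
pose f (v : V) : 'I_((#|V| + 2) %/ 3) := Ordinal (fl v).
have := @leq_card_in _ _ f [set v | Dset c (lab6 v)].
rewrite card_ord; apply.
have key_inj : forall a b cc : nat, (0 < cc)%N -> Dset cc (2 + 2 * a) -> Dset cc (2 + 2 * b) ->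
    (a %/ 3 = b %/ 3)%N -> a = b.
  by move=> a b cc; rewrite /Dset /key; repeat case: ifP; lia.
move=> u v; rewrite !inE => hu hv /(congr1 (@nat_of_ord _)) /= e.
apply: enum_rank_inj; apply/val_inj; exact: (key_inj _ _ _ c0 hu hv e).
Qed.

Lemma width_le (R : realType) (psi : {ffun config V -> R[i]}) : pure_state psi ->
  bd_width psi adj lab6 <= ((#|V| + 2) %/ 3)%:R.
Proof.
move=> hp; rewrite /bd_width; apply: bigmax_le => [|[a b] /= ab]; first exact: ler0n.
have [hA hB] := ent_entropy_bound (edge_side adj lab6 a b) hp.
suff [c [c0 [hc|hc]]] : exists c : 'I_m, (0 < c)%N /\
   ((edge_side adj lab6 a b \subset [set v | Dset c (lab6 v)]) \/
    (~: edge_side adj lab6 a b \subset [set v | Dset c (lab6 v)])).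
- apply: le_trans hA _; rewrite ler_nat; apply: leq_trans (Sc_card c0).
  exact: subset_leq_card.
- apply: le_trans hB _; rewrite ler_nat; apply: leq_trans (Sc_card c0).
  exact: subset_leq_card.
have HDc (c : 'I_m) : (0 < c)%N -> forall y : 'I_m, (0 < y)%N ->
    nat_of_ord y != nat_of_ord c -> Dset c y = Dset c (par6 y).
  by move=> c0 y y0 yc; exact: HD.
case: (padjE par6_lt par60 ab) => [[e lt]|[e lt]].
- have b0 : b = pv6 a by apply/val_inj; rewrite /= e.
  have a0 : (0 < a)%N by apply: leq_ltn_trans lt.
  exists a; split => //; left; apply/fintype.subsetP => v; rewrite !inE b0 => h.
  have e2 := closed_connect (P := fun x : 'I_m => Dset a x)
     (fun x y hxy => rem_closed a0 (HDc a a0) hxy) h.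
  by rewrite /= -e2; exact: Dc.
- have a0' : a = pv6 b by apply/val_inj; rewrite /= e.
  have b0 : (0 < b)%N by apply: leq_ltn_trans lt.
  exists b; split => //; right; apply/fintype.subsetP => v; rewrite !inE a0'.
  apply: contraR => hv.
  have E : remove_edge adj (pv6 b) b =2 remove_edge adj b (pv6 b).
    move=> x y; rewrite /remove_edge; congr (_ && ~~ _); by rewrite orbC.
  rewrite (eq_connect E).
  have ho : nat_of_ord o6 = 0 by [].
  have c1 := conn_out par6_lt par60 b0 (HDc b b0) (Dc b0) ho (D0 b0) hv.
  have c2 := conn_out par6_lt par60 b0 (HDc b b0) (Dc b0) ho (D0 b0) (x := pv6 b) (Dpc b0).
  have Esym : connect_sym (remove_edge adj b (pv6 b)).
    apply: sym_connect_sym => x y; rewrite /remove_edge padj_sym; congr (_ && ~~ _).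
    by rewrite orbC andbC [X in _ || X]andbC.
  apply: connect_trans c2 _; by rewrite Esym.
Qed.

End Tree.

Theorem mainTheorem6 (R : realType) (V : finType) (n : nat)
  (hV : #|V| = n) (hn : (2 <= n)%N) (psi : {ffun config V -> R[i]})
  (hpsi : pure_state psi) :
  ent_width psi <= (Num.ceil (n%:R / 3 : R))%:~R.
Proof.
subst n.
apply: le_trans (nat_le_ceil R #|V|).
apply: le_trans (width_le hn hpsi).
rewrite /ent_width.
have := @ge_inf R [set w | exists (m : nat) (adj : rel 'I_m) (lab : V -> 'I_m),
          branch_decomp adj lab /\ w = bd_width psi adj lab].
move=> H; apply: H.
  exists 0 => w [mm [adj [lab [_ ->]]]]; exact: bd_width_ge0.
by exists (2 * #|V|).+1, (@padj _ par6), (lab6 hn); split => //; exact: tree_bd.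
Qed.
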